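(* Let $(L_i)_{i\in I}$ be a family of lattices with zero, and let $L=\coprod^0_{i\in I}L_i$ with coprojections $e_i\colon L_i\to L$. For each $i$, let $\varepsilon_i\colon\operatorname{Id}L_i\to\operatorname{Id}L$ be the map $X\mapsto\{y\in L: y\le e_i(x)\text{ for some }x\in X\}$, and let $\varepsilon\colon\coprod^0_{i\in I}\operatorname{Id}L_i\to\operatorname{Id}L$ be the unique $0$-lattice homomorphism whose composition with the $i$-th coprojection $\operatorname{Id}L_i\to\coprod^0_{i\in I}\operatorname{Id}L_i$ equals $\varepsilon_i$ for every $i\in I$. Then $\varepsilon$ is a $0$-lattice embedding (a one-to-one zero-preserving lattice homomorphism).
   Context: For a lattice $K$, $\operatorname{Id}K$ is the lattice of all ideals of $K$ (nonempty lower subsets closed under finite joins), ordered by inclusion; if $K$ has a zero, so does $\operatorname{Id}K$ (namely $\{0\}$). $\coprod^0_{i\in I}K_i$ denotes the coproduct of a family of lattices with zero in the category of lattices with zero and zero-preserving lattice homomorphisms. *)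

(* Defs.v *)
From HB Require Import structures.
From mathcomp Require Import all_boot all_order.
From mathcomp Require Import boolp.

Set Implicit Arguments.
Unset Strict Implicit.
Unset Printing Implicit Defensive.

Import Order.Theory.
Local Open Scope order_scope.

Definition is_0hom (d1 d2 : Order.disp_t) (A : bLatticeType d1)
    (B : bLatticeType d2) (f : A -> B) : Prop :=
  [/\ f \bot = \bot,
      (forall x y, f (x `&` y) = f x `&` f y) &
      (forall x y, f (x `|` y) = f x `|` f y)].

Definition is_coproduct0 (I : Type) (d : I -> Order.disp_t)
    (L : forall i, bLatticeType (d i)) (dC : Order.disp_t)
    (C : bLatticeType dC) (e : forall i, L i -> C) : Prop :=
  (forall i, is_0hom (e i)) /\
  (forall (dM : Order.disp_t) (M : bLatticeType dM) (f : forall i, L i -> M),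
     (forall i, is_0hom (f i)) ->
     exists g : C -> M,
       (is_0hom g /\ forall i x, g (e i x) = f i x) /\
       (forall g' : C -> M, is_0hom g' -> (forall i x, g' (e i x) = f i x) ->
          forall c, g' c = g c)).

Section Ideals.
Context (d : Order.disp_t) (L : bLatticeType d).

Definition is_ideal (A : L -> Prop) : Prop :=
  [/\ exists x, A x,
      (forall x y, x <= y -> A y -> A x) &
      (forall x y, A x -> A y -> A (x `|` y))].

Definition ideal := {A : L -> Prop | is_ideal A}.

Definition ideal_set (X : ideal) : L -> Prop := proj1_sig X.

Lemma ideal_bot (X : ideal) : ideal_set X \bot.
Proof.
case: X => A [[x Ax] low _] /=; exact: (low _ _ (le0x x) Ax).
Qed.

Lemma ideal_low (X : ideal) x y : x <= y -> ideal_set X y -> ideal_set X x.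
Proof. by case: X => A [_ low _] /=; apply: low. Qed.

Lemma ideal_join (X : ideal) x y :
  ideal_set X x -> ideal_set X y -> ideal_set X (x `|` y).
Proof. by case: X => A [_ _ jn] /=; apply: jn. Qed.

Lemma ideal_ext (X Y : ideal) :
  (forall x, ideal_set X x <-> ideal_set Y x) -> X = Y.
Proof.
case: X Y => [A HA] [B HB] /= H.
have AB : A = B by apply: funext => x; apply: propext.
subst B; congr exist; exact: Prop_irrelevance.
Qed.

HB.instance Definition _ := gen_eqMixin ideal.
HB.instance Definition _ := gen_choiceMixin ideal.

Definition ideal_le (X Y : ideal) : bool :=
  `[< forall x, ideal_set X x -> ideal_set Y x >].
Definition ideal_lt (X Y : ideal) : bool := (Y != X) && ideal_le X Y.

Lemma ideal_le_refl : reflexive ideal_le.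
Proof. by move=> X; apply/asboolP. Qed.

Lemma ideal_le_anti : antisymmetric ideal_le.
Proof.
move=> X Y /andP[/asboolP XY /asboolP YX]; apply: ideal_ext => x; split.
  exact: XY.
exact: YX.
Qed.

Lemma ideal_le_trans : transitive ideal_le.
Proof.
move=> Y X Z /asboolP XY /asboolP YZ; apply/asboolP => x Xx.
exact/YZ/XY.
Qed.

Fact ideal_display : Order.disp_t. Proof. exact: Order.Disp tt tt. Qed.

HB.instance Definition _ :=
  Order.isPOrder.Build ideal_display ideal (fun _ _ => erefl) ideal_le_refl
    ideal_le_anti ideal_le_trans.

Definition ideal_meet_set (X Y : ideal) : L -> Prop :=
  fun z => ideal_set X z /\ ideal_set Y z.

Lemma ideal_meet_is_ideal X Y : is_ideal (ideal_meet_set X Y).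
Proof.
split.
- by exists \bot; split; apply: ideal_bot.
- by move=> x y xy [Xy Yy]; split; apply: ideal_low xy _.
- by move=> x y [Xx Yx] [Xy Yy]; split; apply: ideal_join.
Qed.

Definition ideal_meet X Y : ideal := exist _ _ (ideal_meet_is_ideal X Y).

Definition ideal_join_set (X Y : ideal) : L -> Prop :=
  fun z => exists x y, [/\ ideal_set X x, ideal_set Y y & z <= x `|` y].

Lemma ideal_join_is_ideal X Y : is_ideal (ideal_join_set X Y).
Proof.
split.
- by exists \bot, \bot, \bot; split; rewrite ?le0x //; apply: ideal_bot.
- move=> z w zw [x [y [Xx Yy wxy]]]; exists x, y; split => //.
  exact: le_trans wxy.
- move=> z w [x [y [Xx Yy zxy]]] [x' [y' [Xx' Yy' wxy']]].
  exists (x `|` x'), (y `|` y'); split; try exact: ideal_join.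
  have H1 : forall a b : L, a <= a `|` b := fun a b => leUl a b.
  have H2 : forall a b : L, b <= a `|` b := fun a b => leUr b a.
  rewrite leUx; apply/andP; split.
    apply: (le_trans zxy); apply: leU2; [exact: H1 | exact: H1].
  apply: (le_trans wxy'); apply: leU2; [exact: H2 | exact: H2].
Qed.

Definition ideal_joinI X Y : ideal := exist _ _ (ideal_join_is_ideal X Y).

Lemma ideal_meetP (X Y Z : ideal) :
  (X <= ideal_meet Y Z) = (X <= Y) && (X <= Z).
Proof.
apply/asboolP/andP => [H|[/asboolP XY /asboolP XZ]].
  by split; apply/asboolP => x /H [].
by move=> x Xx; split; [apply: XY | apply: XZ].
Qed.

Lemma ideal_joinP (X Y Z : ideal) :
  (ideal_joinI X Y <= Z) = (X <= Z) && (Y <= Z).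
Proof.
apply/asboolP/andP => [H|[/asboolP XZ /asboolP YZ]].
  split; apply/asboolP => x Hx; apply: H.
    by exists x, \bot; split; rewrite ?joinx0 //; apply: ideal_bot.
  by exists \bot, x; split; rewrite ?join0x //; apply: ideal_bot.
move=> z [x [y [Xx Yy zxy]]]; apply: ideal_low zxy _.
by apply: ideal_join; [apply: XZ | apply: YZ].
Qed.

HB.instance Definition _ :=
  Order.POrder_MeetJoin_isLattice.Build ideal_display ideal ideal_meetP ideal_joinP.

Definition ideal_zero_set : L -> Prop := fun z => z = \bot.

Lemma ideal_zero_is_ideal : is_ideal ideal_zero_set.
Proof.
split.
- by exists \bot.
- move=> x y xy yb; rewrite yb in xy; apply/eqP; by rewrite -lex0.
- by move=> x y xb yb; rewrite /ideal_zero_set xb yb joinx0.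
Qed.

Definition ideal_zero : ideal := exist _ _ ideal_zero_is_ideal.

Lemma ideal_le0x (X : ideal) : ideal_zero <= X.
Proof. by apply/asboolP => x /= ->; apply: ideal_bot. Qed.

HB.instance Definition _ :=
  Order.hasBottom.Build ideal_display ideal ideal_le0x.

End Ideals.

Notation Id K := (ideal K).

Definition eps_set (d d' : Order.disp_t) (K : bLatticeType d)
    (L : bLatticeType d') (e : K -> L) (X : Id K) : L -> Prop :=
  fun y => exists x, ideal_set X x /\ y <= e x.

(* Main.v *)
Require Import Defs.
From HB Require Import structures.
From mathcomp Require Import all_boot all_order.
From mathcomp Require Import boolp.
From Stdlib Require List.
From mathcomp Require Import zify.
From Stdlib Require Import Lia.

Set Implicit Arguments.
Unset Strict Implicit.
Unset Printing Implicit Defensive.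
Import Order.Theory.
Local Open Scope order_scope.

Section FP.
Context (I : Type) (d : I -> Order.disp_t) (L : forall i, bLatticeType (d i)).

Inductive term := Gen (i : I) (x : L i) | Join (p q : term) | Meet (p q : term).

Definition cast_opt (i : I) (x : L i) (k : I) : option (L k) :=
  match pselect (i = k) with
  | left e => Some (@eq_rect I i (fun j => L j : Type) x k e)
  | right _ => None end.

Lemma cast_opt_same i (x : L i) : cast_opt x i = Some x.
Proof.
rewrite /cast_opt; case: pselect => [e|//].
by rewrite (Prop_irrelevance e erefl).
Qed.

Lemma cast_opt_neq i k (x : L i) : i <> k -> cast_opt x k = None.
Proof. by rewrite /cast_opt; case: pselect. Qed.

Definition oleq k (a b : option (L k)) : Prop :=
  match b with None => True | Some b' =>
    match a with None => False | Some a' => a' <= b' end end.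

Definition ojoin k (a b : option (L k)) : option (L k) :=
  match a, b with Some x, Some y => Some (x `|` y) | _, _ => None end.
Definition omeet k (a b : option (L k)) : option (L k) :=
  match a, b with
  | Some x, Some y => Some (x `&` y)
  | Some x, None => Some x
  | None, Some y => Some y
  | None, None => None end.

Fixpoint U (p : term) : forall k, option (L k) :=
  match p with
  | Gen i x => fun k => if x == \bot then Some \bot else cast_opt x k
  | Join p q => fun k => ojoin (U p k) (U q k)
  | Meet p q => fun k =>
     if pselect (exists k', omeet (U p k') (U q k') = Some \bot)
     then Some \bot else omeet (U p k) (U q k)
  end.

Definition Lo_gen i (x : L i) k : L k :=
  match cast_opt x k with Some y => y | None => \bot end.

Fixpoint Lo (p : term) : forall k, L k :=
  match p with
  | Gen i x => Lo_gen x
  | Join p q => fun k => Lo p k `|` Lo q k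
  | Meet p q => fun k => Lo p k `&` Lo q k
  end.

Inductive R : term -> term -> Prop :=
 | R_join_l p0 p1 q : R p0 q -> R p1 q -> R (Join p0 p1) q
 | R_meet_l0 p0 p1 q : R p0 q -> R (Meet p0 p1) q
 | R_meet_l1 p0 p1 q : R p1 q -> R (Meet p0 p1) q
 | R_join_r0 p q0 q1 : R p q0 -> R p (Join q0 q1)
 | R_join_r1 p q0 q1 : R p q1 -> R p (Join q0 q1)
 | R_meet_r p q0 q1 : R p q0 -> R p q1 -> R p (Meet q0 q1)
 | R_cover p q k : oleq (U p k) (Some (Lo q k)) -> R p q.

Lemma oleq_refl k (a : option (L k)) : oleq a a.
Proof. by case: a => //= a. Qed.
Lemma oleq_trans k (a b c : option (L k)) : oleq a b -> oleq b c -> oleq a c.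
Proof.
case: c => [c|] //; case: b => [b|] //; case: a => [a|] //=; exact: le_trans.
Qed.
Lemma oleq_bot k (a : option (L k)) : oleq (Some \bot) a.
Proof. by case: a => //= a; rewrite le0x. Qed.
Lemma oleq_None k (a : option (L k)) : oleq None a -> a = None.
Proof. by case: a. Qed.
Lemma oleq_Some_bot k (a : option (L k)) : oleq a (Some \bot) -> a = Some \bot.
Proof. by case: a => //= a; rewrite lex0 => /eqP ->. Qed.
Lemma ojoin_l k (a b : option (L k)) : oleq a (ojoin a b).
Proof. by case: a => [a|]; case: b => [b|] //=; rewrite leUl. Qed.
Lemma ojoin_r k (a b : option (L k)) : oleq b (ojoin a b).
Proof. by case: a => [a|]; case: b => [b|] //=; rewrite leUr. Qed.
Lemma ojoin_lub k (a b c : option (L k)) : oleq a c -> oleq b c -> oleq (ojoin a b) c.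
Proof.
case: c => [c|] //; case: a => [a|]; case: b => [b|] //= ac bc.
by rewrite leUx ac bc.
Qed.
Lemma omeet_l k (a b : option (L k)) : oleq (omeet a b) a.
Proof. by case: a => [a|]; case: b => [b|] //=; rewrite ?leIl ?le_refl. Qed.
Lemma omeet_r k (a b : option (L k)) : oleq (omeet a b) b.
Proof. by case: a => [a|]; case: b => [b|] //=; rewrite ?leIr ?le_refl. Qed.
Lemma omeet_glb k (a b c : option (L k)) : oleq c a -> oleq c b -> oleq c (omeet a b).
Proof.
case: a => [a|]; case: b => [b|]; case: c => [c|] //= ca cb.
by rewrite lexI ca cb.
Qed.
Lemma ojoin_mono k (a b a' b' : option (L k)) :
  oleq a a' -> oleq b b' -> oleq (ojoin a b) (ojoin a' b').
Proof.
move=> h1 h2; apply: ojoin_lub.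
  exact: oleq_trans h1 (ojoin_l _ _).
exact: oleq_trans h2 (ojoin_r _ _).
Qed.
Lemma omeet_mono k (a b a' b' : option (L k)) :
  oleq a a' -> oleq b b' -> oleq (omeet a b) (omeet a' b').
Proof.
move=> h1 h2; apply: omeet_glb.
  exact: oleq_trans (omeet_l _ _) h1.
exact: oleq_trans (omeet_r _ _) h2.
Qed.

Lemma U_meet_le p q k : oleq (U (Meet p q) k) (omeet (U p k) (U q k)).
Proof. rewrite /=; case: pselect => h; [exact: oleq_bot | exact: oleq_refl]. Qed.

Lemma U_meet_nonorm p q k :
  ~ (exists k', omeet (U p k') (U q k') = Some \bot) ->
  U (Meet p q) k = omeet (U p k) (U q k).
Proof. by rewrite /=; case: pselect. Qed.

Lemma U_meet_norm p q k :
  (exists k', omeet (U p k') (U q k') = Some \bot) ->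
  U (Meet p q) k = Some \bot.
Proof. by rewrite /=; case: pselect. Qed.

Definition Zt p := forall k, U p k = Some \bot.

Lemma Z_inv p : (exists k, U p k = Some \bot) -> Zt p.
Proof.
elim: p => [i x|p IHp q IHq|p IHp q IHq] [k Hk] k'.
- move: Hk => /=; case: eqP => // xb.
  case: (pselect (i = k)) => [e|ne]; last by rewrite cast_opt_neq.
  subst k; rewrite cast_opt_same => -[] //.
- move: Hk => /=; case E1: (U p k) => [a|] //; case E2: (U q k) => [b|] //= [].
  move/eqP; rewrite -lex0 leUx !lex0 => /andP[/eqP ha /eqP hb]; subst.
  by rewrite (IHp (ex_intro _ k E1)) (IHq (ex_intro _ k E2)) /= joinx0.
- case: (pselect (exists k', omeet (U p k') (U q k') = Some \bot)) => h.
    by rewrite U_meet_norm.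
  by rewrite U_meet_nonorm // in Hk; case: h; exists k.
Qed.

Lemma CD p : (forall k, oleq (Some (Lo p k)) (U p k)) /\
             (forall j k, j <> k -> Lo p j != \bot -> U p k = None).
Proof.
elim: p => [i x|p [C1 D1] q [C2 D2]|p [C1 D1] q [C2 D2]].
- split.
    move=> k /=; rewrite /Lo_gen; case: (pselect (i = k)) => [e|ne].
      by subst k; rewrite cast_opt_same; case: eqP => [->|_] /=.
    by rewrite cast_opt_neq //; case: eqP => _ /=.
  move=> j k jk /=; rewrite /Lo_gen; case: (pselect (i = j)) => [e|ne]; last first.
    by rewrite cast_opt_neq // eqxx.
  subst j; rewrite cast_opt_same => xb; rewrite (negbTE xb) cast_opt_neq //.
- split.
    by move=> k; exact: (ojoin_mono (C1 k) (C2 k)).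
  move=> j k jk /=; case: (Lo p j =P \bot) => [->|h1].
    rewrite join0x => h; by rewrite (D2 j k jk h); case: (U p k).
  by rewrite (D1 j k jk (introN eqP h1)).
- have C3 : forall k, oleq (Some (Lo (Meet p q) k)) (U (Meet p q) k).
    move=> k; case: (pselect (exists k', omeet (U p k') (U q k') = Some \bot)) => h.
      rewrite U_meet_norm //= lex0; apply/eqP.
      case: h => k' hk'; case: (pselect (k = k')) => [e|ne].
        subst k'; apply/eqP; rewrite -lex0.
        have := omeet_mono (C1 k) (C2 k); rewrite hk' /=.
        done.
      apply/eqP; case: (Lo p k =P \bot) => [->|h1]; first by rewrite meet0x.
      case: (Lo q k =P \bot) => [->|h2]; first by rewrite meetx0.
      by move: hk'; rewrite (D1 k k' ne (introN eqP h1)) (D2 k k' ne (introN eqP h2)).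
    rewrite U_meet_nonorm //; exact: omeet_mono (C1 k) (C2 k).
  split => // j k jk h0.
  have h : Lo p j `&` Lo q j != \bot := h0.
  have h1 : Lo p j != \bot by apply: contraNneq h => ->; rewrite meet0x.
  have h2 : Lo q j != \bot by apply: contraNneq h => ->; rewrite meetx0.
  case: (pselect (exists k', omeet (U p k') (U q k') = Some \bot)) => hn.
    have := C3 j; rewrite U_meet_norm //= lex0 => /eqP hb.
    by move: h; rewrite hb eqxx.
  by rewrite U_meet_nonorm // (D1 j k jk h1) (D2 j k jk h2).
Qed.

Lemma Lo_le_U p k : oleq (Some (Lo p k)) (U p k).
Proof. exact: (proj1 (CD p)). Qed.
Lemma U_None_of_Lo p j k : j <> k -> Lo p j != \bot -> U p k = None.
Proof. exact: (proj2 (CD p)). Qed.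

Lemma Z_Lo p k : Zt p -> Lo p k = \bot.
Proof. move=> z; have := Lo_le_U p k; rewrite z /=; by rewrite lex0 => /eqP. Qed.

Lemma L1 p q : R p q -> forall k, oleq (U p k) (U q k) /\ Lo p k <= Lo q k.
Proof.
elim=> {p q}.
- move=> p0 p1 q _ H0 _ H1 k; have [a b] := H0 k; have [a' b'] := H1 k.
  by split; [apply: ojoin_lub | rewrite /= leUx b b'].
- move=> p0 p1 q _ H0 k; have [a b] := H0 k; split.
    exact: oleq_trans (U_meet_le _ _ _) (oleq_trans (omeet_l _ _) a).
  by rewrite /=; apply: le_trans b; rewrite leIl.
- move=> p0 p1 q _ H0 k; have [a b] := H0 k; split.
    exact: oleq_trans (U_meet_le _ _ _) (oleq_trans (omeet_r _ _) a).
  by rewrite /=; apply: le_trans b; rewrite leIr.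
- move=> p q0 q1 _ H0 k; have [a b] := H0 k; split.
    exact: oleq_trans a (ojoin_l _ _).
  by rewrite /=; apply: le_trans b _; rewrite leUl.
- move=> p q0 q1 _ H0 k; have [a b] := H0 k; split.
    exact: oleq_trans a (ojoin_r _ _).
  by rewrite /=; apply: le_trans b _; rewrite leUr.
- move=> p q0 q1 _ H0 _ H1 k; split; last first.
    by rewrite /= lexI (H0 k).2 (H1 k).2.
  case: (pselect (exists k', omeet (U q0 k') (U q1 k') = Some \bot)) => hn.
    rewrite U_meet_norm //; case: hn => k' hk'.
    have := omeet_glb (H0 k').1 (H1 k').1; rewrite hk' => /oleq_Some_bot hz.
    by rewrite (Z_inv (ex_intro _ k' hz) k) /= le_refl.
  rewrite U_meet_nonorm //; exact: omeet_glb (H0 k).1 (H1 k).1.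
- move=> p q k0 H k.
  case E: (U p k0) H => [a|] //= ha.
  case: (a =P \bot) => [ab|anb].
    subst a; have z := Z_inv (ex_intro _ k0 E).
    by rewrite (z k) (Z_Lo k z); split; [exact: oleq_bot | exact: le0x].
  have Lq : Lo q k0 != \bot.
    by apply/eqP => h; apply: anb; apply/eqP; rewrite -lex0 -h.
  case: (pselect (k = k0)) => [e|ne].
    subst k; split.
      by rewrite E; apply: oleq_trans (Lo_le_U q k0).
    by have := Lo_le_U p k0; rewrite E /= => h; apply: le_trans h ha.
  split.
    by rewrite (U_None_of_Lo (fun e => ne (esym e)) Lq).
  case: (Lo p k =P \bot) => [->|h]; first exact: le0x.
  by move: E; rewrite (U_None_of_Lo ne (introN eqP h)).
Qed.

Lemma U_gen_le i (x : L i) : oleq (U (Gen x) i) (Some x).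
Proof. by rewrite /=; case: eqP => [->|_]; rewrite ?cast_opt_same /= ?le_refl. Qed.
Lemma Lo_gen_same i (x : L i) : Lo (Gen x) i = x.
Proof. by rewrite /= /Lo_gen cast_opt_same. Qed.

Lemma R_refl p : R p p.
Proof.
elim: p => [i x|p IHp q IHq|p IHp q IHq].
- apply: (@R_cover _ _ i); rewrite Lo_gen_same; exact: U_gen_le.
- by apply: R_join_l; [apply: R_join_r0 | apply: R_join_r1].
- by apply: R_meet_r; [apply: R_meet_l0 | apply: R_meet_l1].
Qed.

Lemma join_inv q0 q1 r : R (Join q0 q1) r -> R q0 r /\ R q1 r.
Proof.
elim: r => [j y|r0 IH0 r1 IH1|r0 IH0 r1 IH1] H; inversion H; subst;
  try (by split);
  try (by split; apply: (@R_cover _ _ k);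
     [exact: oleq_trans (ojoin_l _ _) H0 | exact: oleq_trans (ojoin_r _ _) H0]).
all: repeat match goal with
  h : R (Join ?a ?b) ?x, ih : R (Join ?a ?b) ?x -> _ |- _ =>
    move: (ih h) => {ih h} [? ?] end.
all: split; auto using R_join_r0, R_join_r1, R_meet_r.
Qed.

Lemma trans_meet p q0 q1 :
  R p q0 -> R p q1 ->
  (forall r, R q0 r -> R p r) -> (forall r, R q1 r -> R p r) ->
  forall r, R (Meet q0 q1) r -> R p r.
Proof.
move=> H0 H1 IHa IHb.
have Hc : forall r k, oleq (U (Meet q0 q1) k) (Some (Lo r k)) -> R p r.
  move=> r k Hk; apply: (@R_cover _ _ k); apply: oleq_trans Hk.
  case: (pselect (exists k', omeet (U q0 k') (U q1 k') = Some \bot)) => hn.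
    case: hn => k' hk'.
    have := omeet_glb (L1 H0 k').1 (L1 H1 k').1; rewrite hk' => /oleq_Some_bot hz.
    have z := Z_inv (ex_intro _ k' hz); rewrite (z k) (U_meet_norm _ (ex_intro _ k' hk')); exact: oleq_refl.
  rewrite U_meet_nonorm //; exact: omeet_glb (L1 H0 k).1 (L1 H1 k).1.
move=> r; elim: r => [j y|r0 IH0 r1 IH1|r0 IH0 r1 IH1] H;
  inversion H; subst; try by [apply: IHa | apply: IHb].
all: try match goal with h : oleq (U (Meet _ _) _) _ |- _ => exact: (Hc _ _ h) end.
all: auto using R_join_r0, R_join_r1, R_meet_r.
Qed.

Lemma R_trans p q r : R p q -> R q r -> R p r.
Proof.
move=> H; elim: H r => {p q}.
- by move=> p0 p1 q _ IH0 _ IH1 r Hr; apply: R_join_l; [apply: IH0 | apply: IH1].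
- by move=> p0 p1 q _ IH r Hr; apply: R_meet_l0; apply: IH.
- by move=> p0 p1 q _ IH r Hr; apply: R_meet_l1; apply: IH.
- by move=> p q0 q1 _ IH r /join_inv [Hr _]; apply: IH.
- by move=> p q0 q1 _ IH r /join_inv [_ Hr]; apply: IH.
- move=> p q0 q1 H0 IH0 H1 IH1 r Hr; exact: (trans_meet H0 H1 IH0 IH1 Hr).
- move=> p q k Hk r Hr; apply: (@R_cover _ _ k).
  apply: oleq_trans Hk _ => /=; exact: (L1 Hr k).2.
Qed.

End FP.


Lemma hom_mono (d1 d2 : Order.disp_t) (A : bLatticeType d1) (B : bLatticeType d2)
  (g : A -> B) : is_0hom g -> forall x y, x <= y -> g x <= g y.
Proof.
case=> _ _ hj x y xy; have -> : y = x `|` y by apply/esym/join_idPr.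
by rewrite hj leUl.
Qed.

Section Ev.
Context (I : Type) (d : I -> Order.disp_t) (L : forall i, bLatticeType (d i)).
Unset Implicit Arguments.
Context (dM : Order.disp_t) (M : bLatticeType dM) (f : forall i, L i -> M).
Set Implicit Arguments.
Hypothesis Hf : forall i, is_0hom (f i).

Fixpoint ev (p : term L) : M :=
  match p with
  | @Gen _ _ _ i x => f i x
  | Join p q => ev p `|` ev q
  | Meet p q => ev p `&` ev q
  end.

Lemma f_bot i : f i \bot = \bot.
Proof. by case: (Hf i). Qed.

Lemma ev_Lo p k : f k (Lo p k) <= ev p.
Proof.
elim: p => [i x|p IHp q IHq|p IHp q IHq] /=.
- rewrite /Lo_gen; case: (pselect (i = k)) => [e|ne].
    by subst k; rewrite cast_opt_same.
  by rewrite cast_opt_neq // f_bot le0x.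
- case: (Hf k) => _ _ ->; exact: leU2.
- case: (Hf k) => _ -> _; exact: leI2.
Qed.

Lemma ev_U p k a : U p k = Some a -> ev p <= f k a.
Proof.
have omeetP : forall p0 p1 k a,
    (forall a, U p0 k = Some a -> ev p0 <= f k a) ->
    (forall a, U p1 k = Some a -> ev p1 <= f k a) ->
    omeet (U p0 k) (U p1 k) = Some a -> ev p0 `&` ev p1 <= f k a.
  move=> p0 p1 k' a' H0 H1.
  case E0: (U p0 k') => [b0|]; case E1: (U p1 k') => [b1|] //= [<-].
  - case: (Hf k') => _ -> _; apply: leI2; [exact: H0 | exact: H1].
  - apply: le_trans (leIl _ _) _; exact: H0.
  - apply: le_trans (leIr _ _) _; exact: H1.
elim: p k a => [i x|p IHp q IHq|p IHp q IHq] k a /=.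
- case: eqP => [->|xb].
    by move=> [<-]; rewrite !f_bot.
  case: (pselect (i = k)) => [e|ne]; last by rewrite cast_opt_neq.
  by subst k; rewrite cast_opt_same => -[<-].
- case E0: (U p k) => [b0|]; case E1: (U q k) => [b1|] //= [<-].
  case: (Hf k) => _ _ ->; apply: leU2; [exact: IHp | exact: IHq].
- case: pselect => [[k' hk']|hn].
    move=> [<-]; rewrite f_bot; have := omeetP _ _ _ _ (IHp k') (IHq k') hk'.
    by rewrite f_bot => /le_trans; apply.
  by rewrite /=; apply: (omeetP _ _ _ _ (IHp k) (IHq k)).
Qed.

Lemma ev_sound p q : R p q -> ev p <= ev q.
Proof.
elim=> {p q} /=.
- by move=> *; rewrite leUx; apply/andP.
- by move=> p0 p1 q _ h; apply: le_trans (leIl _ _) h.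
- by move=> p0 p1 q _ h; apply: le_trans (leIr _ _) h.
- by move=> p q0 q1 _ h; apply: le_trans h (leUl _ _).
- by move=> p q0 q1 _ h; apply: le_trans h (leUr _ _).
- by move=> *; rewrite lexI; apply/andP.
- move=> p q k; case E: (U p k) => [a|] //= ha.
  apply: le_trans (ev_U E) _; apply: le_trans (ev_Lo q k).
  exact: hom_mono (Hf k) _ _ ha.
Qed.

End Ev.


Section Model.
Context (I : Type) (d : I -> Order.disp_t) (L : forall i, bLatticeType (d i)) (i0 : I).

Definition eqv (p q : term L) := R p q /\ R q p.
Definition Tm : Type := (fun _ : I => {A : term L -> Prop | exists p, A = eqv p}) i0.
Definition cls (p : term L) : Tm := exist _ (eqv p) (ex_intro _ p erefl).
Definition trepr (A : Tm) : term L := proj1_sig (cid (proj2_sig A)).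

Lemma repr_cls A : cls (trepr A) = A.
Proof.
case: A => P hP; rewrite /trepr /=; case: cid => p /= e; subst P.
rewrite /cls; congr exist; exact: Prop_irrelevance.
Qed.

Lemma cls_eq p q : eqv p q -> cls p = cls q.
Proof.
move=> [pq qp]; rewrite /cls.
have E : eqv p = eqv q.
  apply: funext => r; apply: propext; rewrite /eqv; split=> -[h1 h2]; split.
  - exact: R_trans qp h1.
  - exact: R_trans h2 pq.
  - exact: R_trans pq h1.
  - exact: R_trans h2 qp.
move: (ex_intro _ p _) (ex_intro _ q _); rewrite E => h1 h2.
congr exist; exact: Prop_irrelevance.
Qed.

Lemma repr_eqv p : eqv (trepr (cls p)) p.
Proof.
rewrite /trepr /=; case: cid => r /= e.
have : eqv p p by split; apply: R_refl.
by rewrite e.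
Qed.

Lemma cls_inj p q : cls p = cls q -> eqv p q.
Proof.
move=> E; have := repr_eqv p; rewrite E => -[h1 h2].
have [h3 h4] := repr_eqv q.
split; [exact: R_trans h2 h3 | exact: R_trans h4 h1].
Qed.

HB.instance Definition _ := gen_eqMixin Tm.
HB.instance Definition _ := gen_choiceMixin Tm.

Definition tle (A B : Tm) : bool := `[< R (trepr A) (trepr B) >].
Definition tlt (A B : Tm) : bool := (B != A) && tle A B.

Lemma tle_refl : reflexive tle.
Proof. by move=> A; apply/asboolP; apply: R_refl. Qed.
Lemma tle_anti : antisymmetric tle.
Proof.
move=> A B /andP[/asboolP h1 /asboolP h2].
by rewrite -(repr_cls A) -(repr_cls B); apply: cls_eq.
Qed.
Lemma tle_trans : transitive tle.
Proof. move=> B A C /asboolP h1 /asboolP h2; apply/asboolP; exact: R_trans h1 h2. Qed.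

Fact tm_display : Order.disp_t. Proof. exact: Order.Disp tt tt. Qed.

HB.instance Definition _ :=
  Order.isPOrder.Build tm_display Tm (fun _ _ => erefl) tle_refl tle_anti tle_trans.

Definition tmeet (A B : Tm) : Tm := cls (Meet (trepr A) (trepr B)).
Definition tjoin (A B : Tm) : Tm := cls (Join (trepr A) (trepr B)).

Lemma R_repr_r p q : R p (trepr (cls q)) <-> R p q.
Proof. have [h1 h2] := repr_eqv q; split => h; [exact: R_trans h h1 | exact: R_trans h h2]. Qed.
Lemma R_repr_l p q : R (trepr (cls p)) q <-> R p q.
Proof. have [h1 h2] := repr_eqv p; split => h; [exact: R_trans h2 h | exact: R_trans h1 h]. Qed.

Lemma tmeetP (X Y Z : Tm) : (X <= tmeet Y Z) = (X <= Y) && (X <= Z).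
Proof.
apply/asboolP/andP; rewrite /tmeet R_repr_r.
  move=> h; split; apply/asboolP.
    exact: R_trans h (R_meet_l0 _ (R_refl _)).
  exact: R_trans h (R_meet_l1 _ (R_refl _)).
by move=> [/asboolP h1 /asboolP h2]; apply: R_meet_r.
Qed.

Lemma tjoinP (X Y Z : Tm) : (tjoin X Y <= Z) = (X <= Z) && (Y <= Z).
Proof.
apply/asboolP/andP; rewrite /tjoin R_repr_l.
  move=> h; split; apply/asboolP.
    exact: R_trans (R_join_r0 _ (R_refl _)) h.
  exact: R_trans (R_join_r1 _ (R_refl _)) h.
by move=> [/asboolP h1 /asboolP h2]; apply: R_join_l.
Qed.

HB.instance Definition _ :=
  Order.POrder_MeetJoin_isLattice.Build tm_display Tm tmeetP tjoinP.

Definition tbot : Tm := cls (Gen (\bot : L i0)).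

Lemma R_bot p : R (Gen (\bot : L i0)) p.
Proof.
apply: (@R_cover _ _ _ _ _ i0).
have -> : U (Gen (\bot : L i0)) i0 = Some \bot by rewrite /= eqxx.
exact: oleq_bot.
Qed.

Lemma tle0x (X : Tm) : tbot <= X.
Proof. by apply/asboolP; rewrite R_repr_l; apply: R_bot. Qed.

HB.instance Definition _ := Order.hasBottom.Build tm_display Tm tle0x.

Lemma le_cls p q : (cls p <= cls q) <-> R p q.
Proof. rewrite /Order.le /=; split => [/asboolP|h]; first by rewrite R_repr_l R_repr_r.
by apply/asboolP; rewrite R_repr_l R_repr_r. Qed.

Lemma meet_cls p q : cls p `&` cls q = cls (Meet p q).
Proof.
apply: cls_eq; have [a b] := repr_eqv p; have [a' b'] := repr_eqv q.
split; apply: R_meet_r.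
- by apply: R_meet_l0.
- by apply: R_meet_l1.
- by apply: R_meet_l0.
- by apply: R_meet_l1.
Qed.

Lemma join_cls p q : cls p `|` cls q = cls (Join p q).
Proof.
apply: cls_eq; have [a b] := repr_eqv p; have [a' b'] := repr_eqv q.
split; apply: R_join_l.
- by apply: R_join_r0.
- by apply: R_join_r1.
- by apply: R_join_r0.
- by apply: R_join_r1.
Qed.

Lemma bot_cls : (\bot : Tm) = cls (Gen (\bot : L i0)).
Proof. by []. Qed.

Definition tgen i (x : L i) : Tm := cls (Gen x).

Lemma tgen_hom i : is_0hom (@tgen i).
Proof.
split.
- rewrite bot_cls /tgen; apply: cls_eq; split; last exact: R_bot.
  apply: (@R_cover _ _ _ _ _ i).
  have -> : U (Gen (\bot : L i)) i = Some \bot by rewrite /= eqxx.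
  exact: oleq_bot.
- move=> x y; rewrite /tgen meet_cls; apply: cls_eq; split.
    apply: R_meet_r; apply: (@R_cover _ _ _ _ _ i); rewrite Lo_gen_same.
      apply: oleq_trans (U_gen_le _) _; exact: leIl.
    apply: oleq_trans (U_gen_le _) _; exact: leIr.
  apply: (@R_cover _ _ _ _ _ i); rewrite Lo_gen_same.
  apply: oleq_trans (U_meet_le _ _ _) _.
  exact: oleq_trans (omeet_mono (U_gen_le x) (U_gen_le y)) (oleq_refl _).
- move=> x y; rewrite /tgen join_cls; apply: cls_eq; split.
    apply: (@R_cover _ _ _ _ _ i).
    have -> : Lo (Join (Gen x) (Gen y)) i = x `|` y by rewrite /= /Lo_gen !cast_opt_same.
    exact: U_gen_le.
  apply: R_join_l; apply: (@R_cover _ _ _ _ _ i); rewrite Lo_gen_same;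
    apply: oleq_trans (U_gen_le _) _; [exact: leUl | exact: leUr].
Qed.

End Model.


Section Univ.
Context (I : Type) (d : I -> Order.disp_t) (L : forall i, bLatticeType (d i)) (i0 : I).
Unset Implicit Arguments.
Context (dC : Order.disp_t) (C : bLatticeType dC) (c : forall i, L i -> C).
Set Implicit Arguments.
Hypothesis Hc : @is_coproduct0 I d L dC C c.

Lemma ev_cls (h : C -> Tm L i0) : is_0hom h ->
  (forall i x, h (c i x) = tgen i0 x) -> forall p, h (ev c p) = cls i0 p.
Proof.
move=> [_ hm hj] hg; elim=> [i x|p IHp q IHq|p IHp q IHq] /=.
- exact: hg.
- by rewrite hj IHp IHq join_cls.
- by rewrite hm IHp IHq meet_cls.
Qed.

Lemma completeness p q : ev c p <= ev c q -> R p q.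
Proof.
have [h [[hh hg] _]] := Hc.2 _ (Tm L i0) (fun i => @tgen _ _ L i0 i) (@tgen_hom _ _ L i0).
move=> le; have := hom_mono hh le; rewrite !(ev_cls hh hg).
by move/le_cls.
Qed.

Lemma ev_hom : is_0hom (fun A : Tm L i0 => ev c (trepr A)).
Proof.
have Hf := Hc.1.
have E : forall p, ev c (trepr (cls i0 p)) = ev c p.
  move=> p; have [a b] := repr_eqv i0 p; apply/le_anti/andP; split; exact: ev_sound.
split.
- rewrite bot_cls E /=; by case: (Hf i0).
- move=> A B; rewrite -{1}(repr_cls A) -{1}(repr_cls B) meet_cls E /=.
  by [].
- move=> A B; rewrite -{1}(repr_cls A) -{1}(repr_cls B) join_cls E /=.
  by [].
Qed.

Lemma generation (a : C) : exists p, a = ev c p.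
Proof.
have [h [[hh hg] _]] := Hc.2 _ (Tm L i0) (fun i => @tgen _ _ L i0 i) (@tgen_hom _ _ L i0).
have [g [_ guniq]] := Hc.2 _ C c Hc.1.
have E : forall p, ev c (trepr (cls i0 p)) = ev c p.
  move=> p; have [a1 b1] := repr_eqv i0 p; apply/le_anti/andP; split;
    apply: ev_sound => //; exact: Hc.1.
exists (trepr (h a)).
have H1 : is_0hom (fun a => ev c (trepr (h a))).
  have [e0 em ej] := ev_hom; case: hh => h0 hm hj.
  split.
  - by rewrite h0 e0.
  - by move=> x y; rewrite hm em.
  - by move=> x y; rewrite hj ej.
have H2 : forall i x, ev c (trepr (h (c i x))) = c i x.
  by move=> i x; rewrite hg /tgen E.
have H3 : is_0hom (fun a : C => a) by [].
rewrite (guniq _ H1 H2 a) -(guniq _ H3 (fun _ _ => erefl) a) //.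
Qed.

End Univ.


Section Idx.
Context (I : Type) (d : I -> Order.disp_t) (L : forall i, bLatticeType (d i)).

Fixpoint idx (p : term L) : list I :=
  match p with
  | @Gen _ _ _ i _ => [:: i]
  | Join p q => idx p ++ idx q
  | Meet p q => idx p ++ idx q
  end.

Lemma idx_nonempty p : exists k, List.In k (idx p).
Proof.
elim: p => [i x|p [k hk] q _|p [k hk] q _] /=; first by exists i; left.
all: by exists k; apply: List.in_or_app; left.
Qed.

Lemma U_outside p k : ~ List.In k (idx p) -> U p k = None \/ U p k = Some \bot.
Proof.
elim: p => [i x|p IHp q IHq|p IHp q IHq] /= hk.
- case: eqP => _; first by right.
  by left; rewrite cast_opt_neq // => e; apply: hk; left.
- have h1 : ~ List.In k (idx p) by move=> h; apply: hk; apply: List.in_or_app; left.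
  have h2 : ~ List.In k (idx q) by move=> h; apply: hk; apply: List.in_or_app; right.
  case: (IHp h1) => ->; first by left.
  by case: (IHq h2) => ->; [left | right; rewrite /= joinx0].
- case: pselect => hn; first by right.
  have h1 : ~ List.In k (idx p) by move=> h; apply: hk; apply: List.in_or_app; left.
  have h2 : ~ List.In k (idx q) by move=> h; apply: hk; apply: List.in_or_app; right.
  case: (IHp h1) => ->; case: (IHq h2) => -> /=; by [left | right; rewrite ?meetx0].
Qed.

Lemma cover_idx p k b : oleq (U p k) (Some b) ->
  exists k', List.In k' (idx p) /\ forall b' : L k', oleq (U p k') (Some b') \/ k' = k.
Abort.

End Idx.


Section Main.
Context (I : Type) (d : I -> Order.disp_t) (L : forall i, bLatticeType (d i)).
Unset Implicit Arguments.
Context (dL : Order.disp_t) (Lc : bLatticeType dL) (e : forall i, L i -> Lc).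
Context (dC : Order.disp_t) (C : bLatticeType dC) (c : forall i, Id (L i) -> C).
Set Implicit Arguments.
Hypothesis He : @is_coproduct0 I d L dL Lc e.
Hypothesis Hc : @is_coproduct0 I (fun _ => ideal_display)
            (fun i => (Id (L i) : bLatticeType ideal_display)) dC C c.
Variable (eps : C -> Id Lc).
Hypothesis Heps0 : is_0hom eps.
Hypothesis Heps : forall i (X : Id (L i)), ideal_set (eps (c i X)) = eps_set (e i) X.
Variable i0 : I.

Local Notation LI := (fun i => (Id (L i) : bLatticeType ideal_display)).
Local Notation tI := (@term I (fun _ => ideal_display) LI).
Local Notation tL := (@term I d L).

Definition Sgp (f : forall i, Id (L i) -> L i) := forall i X, ideal_set X (f i X).
Definition Sg := {f : forall i, Id (L i) -> L i | Sgp f}.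
Definition sle (s t : Sg) := forall i X, sval s i X <= sval t i X.
Definition sjoin (s t : Sg) : Sg :=
  @exist _ Sgp (fun i X => sval s i X `|` sval t i X)
    (fun i X => ideal_join (proj2_sig s i X) (proj2_sig t i X)).
Lemma sle_joinl s t : sle s (sjoin s t).
Proof. by move=> i X; rewrite /= leUl. Qed.
Lemma sle_joinr s t : sle t (sjoin s t).
Proof. by move=> i X; rewrite /= leUr. Qed.
Lemma sle_trans s t u : sle s t -> sle t u -> sle s u.
Proof. by move=> h1 h2 i X; apply: le_trans (h1 i X) (h2 i X). Qed.
Definition s0 : Sg := @exist _ Sgp (fun i X => \bot) (fun i X => ideal_bot X).

Fixpoint subst (s : forall i, Id (L i) -> L i) (p : tI) : tL :=
  match p with
  | @Gen _ _ _ i X => Gen (s i X)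
  | Join p q => Join (subst s p) (subst s q)
  | Meet p q => Meet (subst s p) (subst s q)
  end.

Local Notation E s p := (ev e (subst (sval s) p)).
Local Notation V p := (ev c p).

Lemma idx_subst s p : idx (subst s p) = idx p.
Proof. by elim: p => //= p -> q ->. Qed.

Lemma E_mono s t p : sle s t -> E s p <= E t p.
Proof.
move=> st; elim: p => [i X|p IHp q IHq|p IHp q IHq] /=.
- exact: hom_mono (He.1 i) _ _ (st i X).
- exact: leU2.
- exact: leI2.
Qed.

Lemma subst_mono s t p : sle s t -> R (subst (sval s) p) (subst (sval t) p).
Proof. move=> st; apply: (completeness i0 He); exact: E_mono. Qed.

Lemma U_mono s t p k : sle s t ->
  oleq (U (subst (sval s) p) k) (U (subst (sval t) p) k).
Proof. by move=> st; have := L1 (subst_mono p st) k => -[]. Qed.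

Lemma Zt_down s t p : sle s t -> Zt (subst (sval t) p) -> Zt (subst (sval s) p).
Proof. by move=> st z k; apply: oleq_Some_bot; rewrite -(z k); apply: U_mono. Qed.

Lemma eps_V p : eps (V p) = ev (fun i X => eps (c i X)) p.
Proof.
case: Heps0 => _ hm hj.
by elim: p => [i X|p IHp q IHq|p IHp q IHq] //=; rewrite ?hm ?hj IHp IHq.
Qed.

Lemma F1a (s : Sg) p : ideal_set (eps (V p)) (E s p).
Proof.
rewrite eps_V; elim: p => [i X|p IHp q IHq|p IHp q IHq] /=.
- by rewrite Heps; exists (sval s i X); split; [exact: (proj2_sig s) | exact: le_refl].
- by exists (E s p), (E s q); split.
- by split; [apply: ideal_low IHp; exact: leIl | apply: ideal_low IHq; exact: leIr].
Qed.

Definition sxf i (x : L i) : forall j, Id (L j) -> L j :=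
  fun j Y => match cast_opt x j with
             | Some x' => if pselect (ideal_set Y x') then x' else \bot
             | None => \bot end.
Arguments sxf {i} x j Y.

Lemma sxf_ok i (x : L i) j Y : ideal_set Y (sxf x j Y).
Proof.
rewrite /sxf; case: (cast_opt x j) => [x'|]; last exact: ideal_bot.
by case: pselect => h //; exact: ideal_bot.
Qed.

Definition sx i (x : L i) : Sg := @exist _ Sgp (sxf x) (@sxf_ok i x).

Lemma sx_val i (x : L i) (X : Id (L i)) : ideal_set X x -> sval (sx x) i X = x.
Proof. by move=> hx; rewrite /= /sxf cast_opt_same; case: pselect. Qed.

Lemma sxf_val i (x : L i) (X : Id (L i)) : ideal_set X x -> sxf x i X = x.
Proof. exact: sx_val. Qed.

Lemma F1b q y : ideal_set (eps (V q)) y -> exists t : Sg, y <= E t q.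
Proof.
rewrite eps_V; elim: q y => [i X|p IHp q IHq|p IHp q IHq] y /=.
- rewrite Heps => -[x [hx hy]]; exists (sx x); by rewrite sx_val.
- move=> [a [b [ha hb hy]]]; have [t1 h1] := IHp _ ha; have [t2 h2] := IHq _ hb.
  exists (sjoin t1 t2); apply: le_trans hy _; apply: leU2.
    exact: le_trans h1 (E_mono _ (sle_joinl _ _)).
  exact: le_trans h2 (E_mono _ (sle_joinr _ _)).
- move=> [ha hb]; have [t1 h1] := IHp _ ha; have [t2 h2] := IHq _ hb.
  exists (sjoin t1 t2); rewrite lexI; apply/andP; split.
    exact: le_trans h1 (E_mono _ (sle_joinl _ _)).
  exact: le_trans h2 (E_mono _ (sle_joinr _ _)).
Qed.

Lemma Lo_approx (s : Sg) (q : tI) k : ideal_set (Lo q k) (Lo (subst (sval s) q) k).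
Proof.
elim: q => [i X|p IHp q IHq|p IHp q IHq] /=.
- rewrite /Lo_gen; case: (pselect (i = k)) => [ee|ne].
    subst k; rewrite !cast_opt_same; exact: (proj2_sig s).
  by rewrite !cast_opt_neq.
- by exists (Lo (subst (sval s) p) k), (Lo (subst (sval s) q) k); split.
- by split; [apply: ideal_low IHp; exact: leIl | apply: ideal_low IHq; exact: leIr].
Qed.


Lemma c_mono k (X Y : Id (L k)) :
  (forall z, ideal_set X z -> ideal_set Y z) -> c k X <= c k Y.
Proof. by move=> h; apply: (hom_mono (Hc.1 k)); apply/asboolP. Qed.

Lemma c_bot k (X : Id (L k)) : (forall z, ideal_set X z -> z = \bot) -> c k X = \bot.
Proof.
move=> h; apply/eqP; rewrite -lex0.
have <- : c k \bot = \bot by case: (Hc.1 k).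
exact: c_mono.
Qed.

Lemma U_none_mono s t p k : sle s t -> U (subst (sval s) p) k = None ->
  U (subst (sval t) p) k = None.
Proof. by move=> st h; apply: oleq_None; rewrite -h; apply: U_mono. Qed.

Lemma U_some_mono s t p k a b : sle s t -> U (subst (sval s) p) k = Some a ->
  U (subst (sval t) p) k = Some b -> a <= b.
Proof. by move=> st ha hb; have := U_mono p k st; rewrite ha hb. Qed.

Lemma U_get (s : Sg) p k : (forall s : Sg, U (subst (sval s) p) k <> None) ->
  exists u, U (subst (sval s) p) k = Some u.
Proof. by move=> h; case E: (U (subst (sval s) p) k) => [u|]; [exists u | have := h s]. Qed.

Definition limset (p : tI) k : L k -> Prop :=
  fun y => exists s : Sg, exists u, U (subst (sval s) p) k = Some u /\ y <= u.
Arguments limset p k y : clear implicits.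

Lemma lim_ideal p k (H : forall s : Sg, U (subst (sval s) p) k <> None) :
  is_ideal (limset p k).
Proof.
split.
- have [u hu] := U_get s0 H; exists \bot, s0, u; split => //; exact: le0x.
- by move=> x y xy [s [u [hu yu]]]; exists s, u; split => //; apply: le_trans xy yu.
- move=> x y [s1 [u1 [h1 x1]]] [s2 [u2 [h2 y2]]].
  have [u hu] := U_get (sjoin s1 s2) H; exists (sjoin s1 s2), u; split => //.
  rewrite leUx; apply/andP; split.
    exact: le_trans x1 (U_some_mono (sle_joinl _ _) h1 hu).
  exact: le_trans y2 (U_some_mono (sle_joinr _ _) h2 hu).
Qed.

Definition lim p k H : Id (L k) := exist _ (limset p k) (@lim_ideal p k H).

Lemma lim_in p k H (s : Sg) :
  exists u, U (subst (sval s) p) k = Some u /\ ideal_set (@lim p k H) u.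
Proof.
have [u hu] := U_get s H; exists u; split => //; exists s, u; split => //.
Qed.

Lemma pigeon (A : Type) (l : list A) : forall (P : A -> Sg -> Prop),
  (forall a s t, sle s t -> P a t -> P a s) ->
  (forall s, exists a, List.In a l /\ P a s) ->
  exists a, List.In a l /\ forall s, P a s.
Proof.
elim: l => [|a l IH] P down H.
  by have [a [[] _]] := H s0.
case: (pselect (forall s, P a s)) => hall; first by exists a; split => //; left.
have [s1 hs1] : exists s1, ~ P a s1.
  apply: contrapT => hh; apply: hall => s; apply: contrapT => h; apply: hh; by exists s.
have [b [hb Hb]] : exists b, List.In b l /\ forall s, P b (sjoin s s1).
  apply: (IH (fun b s => P b (sjoin s s1))).
    move=> b s t st; apply: down => i X /=; apply: leU2 => //; exact: le_refl.
  move=> s; have [b [[eb|hb] Pb]] := H (sjoin s s1).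
    by subst b; exfalso; apply: hs1; apply: down Pb; exact: sle_joinr.
  by exists b.
exists b; split; first by right.
by move=> s; apply: down (Hb s); exact: sle_joinl.
Qed.

Lemma ojoin_bot k (a b : option (L k)) : ojoin a b = Some \bot -> a = Some \bot /\ b = Some \bot.
Proof.
case: a => [a|]; case: b => [b|] //= [] /eqP; rewrite -lex0 leUx !lex0.
by case/andP => /eqP -> /eqP ->.
Qed.

Lemma omeet_None_l k (b : option (L k)) : omeet None b = b.
Proof. by case: b. Qed.
Lemma omeet_None_r k (a : option (L k)) : omeet a None = a.
Proof. by case: a. Qed.
Lemma omeet_bot_l k (b : option (L k)) : omeet (Some \bot) b = Some \bot.
Proof. by case: b => //= b; rewrite meet0x. Qed.
Lemma omeet_bot_r k (a : option (L k)) : omeet a (Some \bot) = Some \bot.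
Proof. by case: a => //= a; rewrite meetx0. Qed.

Lemma Meet_Zt s p q k' :
  omeet (U (subst s p) k') (U (subst s q) k') = Some \bot ->
  Zt (subst s (Meet p q)).
Proof. by move=> h k; change (U (Meet (subst s p) (subst s q)) k = Some \bot); rewrite U_meet_norm //; exists k'. Qed.

Lemma SUZL p :
  (forall k (Y : Id (L k)),
     (forall s : Sg, exists u, U (subst (sval s) p) k = Some u /\ ideal_set Y u) ->
     V p <= c k Y) /\
  ((forall s : Sg, Zt (subst (sval s) p)) -> V p = \bot).
Proof.
have hc := Hc.1.
elim: p => [i X|p [SUp ZLp] q [SUq ZLq]|p [SUp ZLp] q [SUq ZLq]].
- split.
  + move=> k Y H /=; case: (pselect (i = k)) => [ee|ne].
      subst k; apply: c_mono => x hx; have [u [hu hY]] := H (sx x).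
      move: hu; rewrite /= sxf_val // cast_opt_same.
      case: eqP => [->|_] => [_|[eu]]; [exact: ideal_bot | by rewrite eu].
    rewrite (c_bot (X := X)) ?le0x // => x hx; have [u [hu _]] := H (sx x).
    move: hu; rewrite /= sxf_val // cast_opt_neq //.
    by case: eqP.
  + move=> H /=; apply: c_bot => x hx; have := H (sx x) i.
    rewrite /= sxf_val // cast_opt_same; by case: eqP => // _ [].
- split.
  + move=> k Y H /=; rewrite leUx; apply/andP; split; [apply: SUp | apply: SUq] => s;
      have [u [hu hY]] := H s; move: hu => /=;
      case E0: (U (subst (sval s) p) k) => [a|];
      case E1: (U (subst (sval s) q) k) => [b|] //= [eu].
      by exists a; split => //; apply: ideal_low hY; rewrite -eu leUl.
    by exists b; split => //; apply: ideal_low hY; rewrite -eu leUr.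
  + move=> H /=; rewrite ZLp ?ZLq ?joinx0 // => s k.
      by have /ojoin_bot [] := H s k.
    by have /ojoin_bot [] := H s k.
- have ZL : (forall s : Sg, Zt (subst (sval s) (Meet p q))) -> V (Meet p q) = \bot.
    move=> H.
    have Hk : forall s : Sg, exists k, List.In k (idx (Meet p q)) /\
        omeet (U (subst (sval s) p) k) (U (subst (sval s) q) k) = Some \bot.
      move=> s.
      have [k' hk'] : exists k', omeet (U (subst (sval s) p) k') (U (subst (sval s) q) k') = Some \bot.
        apply: contrapT => hn; have := H s i0.
        change (U (Meet (subst (sval s) p) (subst (sval s) q)) i0 = Some \bot -> False).
        by rewrite U_meet_nonorm // => h; apply: hn; exists i0.
      case: (pselect (List.In k' (idx (Meet p q)))) => hin; first by exists k'.
      have hin0 : ~ List.In k' (idx (subst (sval s) p)).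
        by rewrite idx_subst => h; apply: hin; apply: List.in_or_app; left.
      have hin1 : ~ List.In k' (idx (subst (sval s) q)).
        by rewrite idx_subst => h; apply: hin; apply: List.in_or_app; right.
      have [k0 hk0] := idx_nonempty (Meet p q); exists k0; split => //.
      case: (U_outside hin0) => E0; case: (U_outside hin1) => E1; move: hk'; rewrite E0 E1 //= => _.
      + by rewrite (Z_inv (ex_intro _ k' E1) k0) omeet_bot_r.
      + by rewrite (Z_inv (ex_intro _ k' E0) k0) omeet_bot_l.
      + by rewrite (Z_inv (ex_intro _ k' E0) k0) omeet_bot_l.
    have [k [_ Hall]] := pigeon (l := idx (Meet p q))
      (P := fun k s => omeet (U (subst (sval s) p) k) (U (subst (sval s) q) k) = Some \bot)
      (fun k s t st h => oleq_Some_bot (eq_ind _ (fun z => oleq _ z)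
          (omeet_mono (U_mono p k st) (U_mono q k st)) _ h)) Hk.
    case: (pselect (exists s : Sg, U (subst (sval s) p) k = None)) => [[s1 h1]|n1];
    case: (pselect (exists s : Sg, U (subst (sval s) q) k = None)) => [[s2 h2]|n2].
    + have := Hall (sjoin s1 s2).
      by rewrite (U_none_mono (sle_joinl _ _) h1) (U_none_mono (sle_joinr _ _) h2).
    + rewrite /= ZLq ?meetx0 // => s; apply: Z_inv; exists k.
      have := Hall (sjoin s s1); rewrite (U_none_mono (sle_joinr _ _) h1) omeet_None_l => ht.
      by apply: oleq_Some_bot; rewrite -ht; apply: U_mono; exact: sle_joinl.
    + rewrite /= ZLp ?meet0x // => s; apply: Z_inv; exists k.
      have := Hall (sjoin s s2); rewrite (U_none_mono (sle_joinr _ _) h2) omeet_None_r => ht.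
      by apply: oleq_Some_bot; rewrite -ht; apply: U_mono; exact: sle_joinl.
    + have Hp : forall s : Sg, U (subst (sval s) p) k <> None by move=> s h; apply: n1; exists s.
      have Hq : forall s : Sg, U (subst (sval s) q) k <> None by move=> s h; apply: n2; exists s.
      have h0 := SUp k _ (lim_in Hp); have h1 := SUq k _ (lim_in Hq).
      apply/eqP; rewrite -lex0 /=; apply: le_trans (leI2 h0 h1) _.
      case: (hc k) => _ <- _; rewrite c_bot //.
      move=> z [[s1 [u0 [e0 z0]]] [s2 [u1 [e1 z1]]]].
      have [u0' e0'] := U_get (sjoin s1 s2) Hp; have [u1' e1'] := U_get (sjoin s1 s2) Hq.
      have := Hall (sjoin s1 s2); rewrite e0' e1' /= => -[hb0].
      apply/eqP; rewrite -lex0 -hb0 lexI; apply/andP; split.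
        exact: le_trans z0 (U_some_mono (sle_joinl _ _) e0 e0').
      exact: le_trans z1 (U_some_mono (sle_joinr _ _) e1 e1').
  split => // k Y H.
  case: (pselect (forall s : Sg, Zt (subst (sval s) (Meet p q)))) => hz.
    by rewrite ZL // le0x.
  have [sN hN] : exists sN : Sg, ~ Zt (subst (sval sN) (Meet p q)).
    apply: contrapT => h; apply: hz => s; apply: contrapT => h'; apply: h; by exists s.
  have Hnn : forall s : Sg, sle sN s ->
      U (subst (sval s) (Meet p q)) k = omeet (U (subst (sval s) p) k) (U (subst (sval s) q) k).
    move=> s hs.
    change (U (Meet (subst (sval s) p) (subst (sval s) q)) k = omeet (U (subst (sval s) p) k) (U (subst (sval s) q) k)).
    rewrite U_meet_nonorm // => -[k' hk']; apply: hN.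
    apply: (Zt_down hs); exact: Meet_Zt hk'.
  case: (pselect (exists s : Sg, U (subst (sval s) p) k = None)) => [[s1 h1]|n1];
  case: (pselect (exists s : Sg, U (subst (sval s) q) k = None)) => [[s2 h2]|n2].
  + have [u [hu _]] := H (sjoin (sjoin s1 s2) sN).
    move: hu; rewrite Hnn; last exact: sle_joinr.
    rewrite (U_none_mono (sle_trans (sle_joinl s1 s2) (sle_joinl _ sN)) h1).
    by rewrite (U_none_mono (sle_trans (sle_joinr s1 s2) (sle_joinl _ sN)) h2).
  + rewrite /=; apply: le_trans (leIr _ _) _; apply: SUq => s.
    have [u [hu hY]] := H (sjoin (sjoin s s1) sN).
    move: hu; rewrite Hnn; last exact: sle_joinr.
    rewrite (U_none_mono (sle_trans (sle_joinr s s1) (sle_joinl _ sN)) h1) omeet_None_l => hu.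
    case E: (U (subst (sval s) q) k) => [u'|]; last by exfalso; apply: n2; exists s.
    exists u'; split => //; apply: ideal_low hY.
    exact: U_some_mono (sle_trans (sle_joinl s s1) (sle_joinl _ sN)) E hu.
  + rewrite /=; apply: le_trans (leIl _ _) _; apply: SUp => s.
    have [u [hu hY]] := H (sjoin (sjoin s s2) sN).
    move: hu; rewrite Hnn; last exact: sle_joinr.
    rewrite (U_none_mono (sle_trans (sle_joinr s s2) (sle_joinl _ sN)) h2) omeet_None_r => hu.
    case E: (U (subst (sval s) p) k) => [u'|]; last by exfalso; apply: n1; exists s.
    exists u'; split => //; apply: ideal_low hY.
    exact: U_some_mono (sle_trans (sle_joinl s s2) (sle_joinl _ sN)) E hu.
  + have Hp : forall s : Sg, U (subst (sval s) p) k <> None by move=> s h; apply: n1; exists s.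
    have Hq : forall s : Sg, U (subst (sval s) q) k <> None by move=> s h; apply: n2; exists s.
    have h0 := SUp k _ (lim_in Hp); have h1 := SUq k _ (lim_in Hq).
    rewrite /=; apply: le_trans (leI2 h0 h1) _.
    case: (hc k) => _ <- _; apply: c_mono.
    move=> z [[s1 [u0 [e0 z0]]] [s2 [u1 [e1 z1]]]].
    set t := sjoin (sjoin s1 s2) sN.
    have [u0' e0'] := U_get t Hp; have [u1' e1'] := U_get t Hq.
    have [u [hu hY]] := H t; move: hu; rewrite Hnn; last exact: sle_joinr.
    rewrite e0' e1' /= => -[hu]; apply: ideal_low hY; rewrite -hu lexI; apply/andP; split.
      exact: le_trans z0 (U_some_mono (sle_trans (sle_joinl _ _) (sle_joinl _ _)) e0 e0').
    exact: le_trans z1 (U_some_mono (sle_trans (sle_joinr _ _) (sle_joinl _ _)) e1 e1').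
Qed.

Fixpoint tsize (p : tI) : nat :=
  match p with
  | @Gen _ _ _ _ _ => 1
  | Join p q => (tsize p + tsize q).+1
  | Meet p q => (tsize p + tsize q).+1
  end.

Lemma tsize_pos p : (0 < tsize p)%N.
Proof. by case: p. Qed.

Lemma R_MJ_inv (a b x y : tL) : R (Meet a b) (Join x y) ->
  R a (Join x y) \/ R b (Join x y) \/ R (Meet a b) x \/ R (Meet a b) y \/
  exists k, oleq (U (Meet a b) k) (Some (Lo (Join x y) k)).
Proof.
move=> h; inversion h; subst.
- by left.
- by right; left.
- by right; right; left.
- by right; right; right; left.
- by right; right; right; right; exists k.
Qed.

Lemma ML_aux n : forall p q, (tsize p + tsize q <= n)%N ->
  (forall s : Sg, exists t : Sg, R (subst (sval s) p) (subst (sval t) q)) -> V p <= V q.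
Proof.
elim: n => [|n IH] p q hn H.
  by move: hn; have := tsize_pos p; case: (tsize p).
case: p hn H => [i X|p0 p1|p0 p1] hn H.
- apply: le_trans (ev_Lo Hc.1 q i); apply: c_mono => x hx.
  have [t ht] := H (sx x); have := (L1 ht i).2.
  rewrite /= /Lo_gen sxf_val // cast_opt_same => hle.
  exact: ideal_low hle (Lo_approx t q i).
- rewrite /= leUx; apply/andP; split; apply: IH.
  + by move: hn => /=; lia.
  + by move=> s; have [t ht] := H s; exists t; exact: (join_inv ht).1.
  + by move: hn => /=; lia.
  + by move=> s; have [t ht] := H s; exists t; exact: (join_inv ht).2.
- case: q hn H => [j Y|q0 q1|q0 q1] hn H.
  + apply: (SUZL (Meet p0 p1)).1 => s; have [t ht] := H s.
    have := oleq_trans (L1 ht j).1 (U_gen_le _).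
    case HE: (U (subst (sval s) (Meet p0 p1)) j) => [u|] //= hu.
    exists u; split => //; apply: ideal_low hu _; exact: (proj2_sig t).
  + pose P := fun (a : nat + I) (s : Sg) => exists t : Sg, match a with
      | inl 0 => R (subst (sval s) p0) (subst (sval t) (Join q0 q1))
      | inl 1 => R (subst (sval s) p1) (subst (sval t) (Join q0 q1))
      | inl 2 => R (subst (sval s) (Meet p0 p1)) (subst (sval t) q0)
      | inl 3 => R (subst (sval s) (Meet p0 p1)) (subst (sval t) q1)
      | inl _ => False
      | inr k => oleq (U (subst (sval s) (Meet p0 p1)) k)
                      (Some (Lo (subst (sval t) (Join q0 q1)) k)) end.
    have down : forall a s s', sle s s' -> P a s' -> P a s.
      move=> a s s' ss' [t ht]; exists t.
      case: a ht => [[|[|[|[|m]]]]|k] ht //; try exact: R_trans (subst_mono _ ss') ht.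
      exact: oleq_trans (U_mono _ k ss') ht.
    pose l := List.app [:: inl 0; inl 1; inl 2; inl 3] (List.map inr (idx (Meet p0 p1))).
    have cov : forall s, exists a, List.In a l /\ P a s.
      move=> s; have [t ht] := H s.
      have inr_in : forall k, List.In k (idx (Meet p0 p1)) -> List.In (@inr nat I k) l.
        by move=> k hk; rewrite /l; apply: List.in_or_app; right; apply: List.in_map.
      case: (R_MJ_inv ht) => [h|[h|[h|[h|[k hk]]]]].
      * by exists (inl 0); split; [left | exists t].
      * by exists (inl 1); split; [right; left | exists t].
      * by exists (inl 2); split; [right; right; left | exists t].
      * by exists (inl 3); split; [right; right; right; left | exists t].
      * case: (pselect (List.In k (idx (Meet p0 p1)))) => hin.
          by exists (inr k); split; [exact: inr_in | exists t].
        have hin' : ~ List.In k (idx (subst (sval s) (Meet p0 p1))) by rewrite idx_subst.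
        have [k0 hk0] := idx_nonempty (Meet p0 p1).
        exists (inr k0); split; first exact: inr_in.
        exists t; case: (U_outside hin') => HE; rewrite HE in hk => //.
        by rewrite (Z_inv (ex_intro _ k HE) k0); exact: oleq_bot.
    have [a [_ Pa]] := pigeon down cov.
    case: a Pa => [[|[|[|[|m]]]]|k] Pa.
    * apply: (le_trans (leIl (V p0) (V p1))); apply: (IH p0 (Join q0 q1)); last exact: Pa.
      by move: hn => /=; lia.
    * apply: (le_trans (leIr (V p1) (V p0))); apply: (IH p1 (Join q0 q1)); last exact: Pa.
      by move: hn => /=; lia.
    * apply: (le_trans _ (leUl (V q0) (V q1))); apply: (IH (Meet p0 p1) q0); last exact: Pa.
      by move: hn => /=; lia.
    * apply: (le_trans _ (leUr (V q1) (V q0))); apply: (IH (Meet p0 p1) q1); last exact: Pa.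
      by move: hn => /=; lia.
    * by have [t []] := Pa s0.
    * apply: le_trans (ev_Lo Hc.1 (Join q0 q1) k); apply: (SUZL (Meet p0 p1)).1 => s.
      have [t ht] := Pa s.
      case HE: (U (subst (sval s) (Meet p0 p1)) k) ht => [u|] // ht.
      exists u; split => //.
      exact: (@ideal_low _ _ (Lo (Join q0 q1) k) _ _ ht (Lo_approx t (Join q0 q1) k)).
  + have h0 : V (Meet p0 p1) <= V q0.
      apply: IH; first by move: hn => /=; lia.
      move=> s; have [t ht] := H s; exists t; apply: R_trans ht _.
      exact: R_meet_l0 (R_refl _).
    have h1 : V (Meet p0 p1) <= V q1.
      apply: IH; first by move: hn => /=; lia.
      move=> s; have [t ht] := H s; exists t; apply: R_trans ht _.
      exact: R_meet_l1 (R_refl _).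
    by apply/(le_trans _ (le_refl (V (Meet q0 q1)))); rewrite [V (Meet q0 q1)]/= lexI h0 h1.
Qed.

Lemma ML p q :
  (forall s : Sg, exists t : Sg, R (subst (sval s) p) (subst (sval t) q)) -> V p <= V q.
Proof. exact: (@ML_aux (tsize p + tsize q) p q (leqnn _)). Qed.

Lemma main_le p q : eps (V p) = eps (V q) -> V p <= V q.
Proof.
move=> h; apply: ML => s.
have := F1a s p; rewrite h => /F1b [t ht]; exists t.
exact: (completeness i0 He).
Qed.

End Main.


Unset Implicit Arguments.
Set Strict Implicit.

Theorem theorem5p2 (I : Type) (d : I -> Order.disp_t)
    (L : forall i, bLatticeType (d i))
    (dL : Order.disp_t) (Lc : bLatticeType dL) (e : forall i, L i -> Lc)
    (He : @is_coproduct0 I d L dL Lc e)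
    (dC : Order.disp_t) (C : bLatticeType dC) (c : forall i, Id (L i) -> C)
    (Hc : @is_coproduct0 I (fun _ => ideal_display)
            (fun i => (Id (L i) : bLatticeType ideal_display)) dC C c)
    (eps : C -> Id Lc)
    (Heps0 : is_0hom eps)
    (Heps : forall i (X : Id (L i)), ideal_set (eps (c i X)) = eps_set (e i) X) :
  injective eps.
Proof.
case: (pselect (exists i : I, True)) => [[i0 _]|nI].
  move=> a b hab.
  have [p ep] := generation i0 Hc a; have [q eq] := generation i0 Hc b.
  subst a b; apply/le_anti/andP; split.
    exact: (main_le He Hc Heps0 Heps i0 hab).
  exact: (main_le He Hc Heps0 Heps i0 (esym hab)).
have [g [_ gu]] := Hc.2 _ C c Hc.1.
have vac : forall (f : C -> C) i (x : Id (L i)), f (c i x) = c i x.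
  by move=> f i; exfalso; apply: nI; exists i.
have h1 : is_0hom (fun x : C => x) by [].
have h2 : is_0hom (fun _ : C => (\bot : C)).
  by split => // *; rewrite ?meetxx ?joinxx.
have all_bot : forall x : C, x = \bot.
  move=> x; rewrite (gu _ h1 (vac _) x) -(gu _ h2 (vac _) x) //.
by move=> a b _; rewrite (all_bot a) (all_bot b).
Qed.
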